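(* Let $d\ge 2$ and $r=r_c=\sqrt{2}$. Consider random sequential adsorption on $S^{d-1}$ with parameter $r$, as defined in the context. Then with probability $1$ the process terminates, and the final (complete) parking consists of exactly $d+1$ points.
   Context: Let $d\ge 2$ and let $S^{d-1}=\{x\in\mathbb{R}^d:|x|=1\}$ be the unit sphere centred at the origin, with $|\cdot|$ the Euclidean norm on $\mathbb{R}^d$. For $r>0$, a parking of radius $r$ on $S^{d-1}$ is a finite set of points $x_1,\dots,x_n\in S^{d-1}$ such that $|x_i-x_j|\ge r$ for all $i\ne j$. Note that $|x_i-x_j|\ge r$ is equivalent to $x_i\cdot x_j\le 1-\tfrac12 r^2$; in particular, for $r=\sqrt2$ it is equivalent to $x_i\cdot x_j\le 0$. Random sequential adsorption with parameter $r$ is the following random process. Start with the empty set. Given the currently parked points $x_1,\dots,x_n$, let $A_n=\{x\in S^{d-1}: |x-x_i|\ge r \text{ for all } i\le n\}$ be the available set ($A_0=S^{d-1}$). If $A_n$ has positive $(d-1)$-dimensional surface measure, draw $x_{n+1}$ from the normalized surface measure restricted to $A_n$ (independently of everything else given the past) and continue; otherwise stop. The final set of parked points is the resulting complete parking. *)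

(* Defs.v *)
From HB Require Import structures.
From mathcomp Require Import all_boot all_order all_algebra.
From mathcomp Require Import all_classical all_reals.
From mathcomp Require Import ereal topology normedtype numfun measure
  lebesgue_measure lebesgue_integral.
Set Implicit Arguments. Unset Strict Implicit. Unset Printing Implicit Defensive.
Import Order.TTheory GRing.Theory Num.Theory.
Local Open Scope ring_scope.
Local Open Scope classical_set_scope.

Section RSA.
Variable R : realType.

Definition dotp (d : nat) (x y : 'rV[R]_d) : R := (x *m y^T) 0 0.
Definition enorm (d : nat) (x : 'rV[R]_d) : R := Num.sqrt (dotp x x).

Definition sphere (d : nat) : set 'rV[R]_d := [set x | dotp x x = 1].

(* iterated Lebesgue integral over the coordinates 0..n-1 (Lebesgue measure
   on R^n, via Tonelli) *)
Fixpoint iint (n : nat) (f : (nat -> R) -> \bar R) : \bar R :=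
  match n with
  | 0 => f (fun _ => 0)
  | n'.+1 => (\int[@lebesgue_measure R]_t
                iint n' (fun g => f (fun i => if i == n' then t else g i)))%E
  end.

Definition leb_int (d : nat) (f : 'rV[R]_d -> \bar R) : \bar R :=
  iint d (fun g => f (\row_(i < d) g i)).

(* integral over S^{d-1} with respect to the cone measure
   sigma(A) = lambda_d({t x | 0 < t <= 1, x in A}); this is (1/d times) the
   (d-1)-dimensional surface measure on S^{d-1}. Only ratios of it are used,
   so the constant factor is irrelevant. *)
Definition sph_int (d : nat) (f : 'rV[R]_d -> \bar R) : \bar R :=
  leb_int (fun x => if (0 < dotp x x) && (dotp x x <= 1)
                    then f ((enorm x)^-1 *: x) else 0%E).

Definition sph_meas (d : nat) (A : set 'rV[R]_d) : \bar R :=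
  sph_int (fun y => (\1_A y)%:E).

Definition avail (d : nat) (r : R) (s : seq 'rV[R]_d) : set 'rV[R]_d :=
  [set x | sphere x /\ forall y, y \in s -> r <= enorm (x - y)].

(* rsa_stop_prob d r k s = probability that random sequential adsorption with
   parameter r, started from the currently parked points s, parks exactly k
   further points and then stops (i.e. the final parking has size size s + k).
   A new point is drawn from the normalized surface measure restricted to the
   available set, as long as that set has positive measure. *)
Fixpoint rsa_stop_prob (d : nat) (r : R) (k : nat) (s : seq 'rV[R]_d)
  : \bar R :=
  let m := sph_meas (avail r s) in
  match k with
  | 0 => if (0 < m)%E then 0%E else 1%E
  | k'.+1 =>
      if (0 < m)%E then
        ((fine m)^-1%:E *
         sph_int (fun y => (\1_(avail r s) y)%:E * rsa_stop_prob r k' (y :: s)))%E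
      else 0%E
  end.

End RSA.

(* Main.v *)
Require Import Defs.
From HB Require Import structures.
From mathcomp Require Import all_boot all_order all_algebra.
From mathcomp Require Import all_classical all_reals.
From mathcomp Require Import ereal topology normedtype numfun measure
  lebesgue_measure lebesgue_integral measurable_realfun.
From mathcomp Require Import lra ring.
Import Order.TTheory GRing.Theory Num.Theory.
Set Implicit Arguments. Unset Strict Implicit. Unset Printing Implicit Defensive.
Local Open Scope ring_scope.
Local Open Scope classical_set_scope.
Section P1.
Variable R : realType.
Local Notation leb := (@lebesgue_measure R).
Import HBNNSimple.

Lemma int_le_off (t0 : R) (f1 f2 : R -> \bar R) :
  (forall t, (0 <= f1 t)%E) -> (forall t, (0 <= f2 t)%E) ->
  (forall t, t <> t0 -> (f1 t <= f2 t)%E) ->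
  (\int[leb]_t f1 t <= \int[leb]_t f2 t)%E.
Proof.
move=> f10 f20 f12.
rewrite !ge0_integralTE//.
apply: ge_ereal_sup => _ [h /= hf1 <-].
have mN : measurable (~` (@set1 (measurableTypeR R) t0)) by apply: measurableC; exact: measurable_set1.
pose h' := mul_nnsfun h (indic_nnsfun R mN).
apply: ereal_sup_ubound; exists h'.
  move=> x /=; rewrite /h' /= mindicE.
  have [->|xt] := eqVneq x t0.
    by rewrite /= memNset //= mulr0 f20.
  by rewrite mem_set //= ?mulr1; [apply: le_trans (hf1 x) (f12 _ _); apply/eqP|apply/eqP].
have E (k : {nnsfun measurableTypeR R >-> R}) : sintegral leb k = (\int[leb]_x (k x)%:E)%E.
  by rewrite integral_nnsfun// patch_setT.
rewrite !E.
apply: ge0_ae_eq_integral => //.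
- by apply: measurableT_comp => //; apply: measurable_funP.
- by apply: measurableT_comp => //; apply: measurable_funP.
- by move=> x _; rewrite lee_fin.
- by move=> x _; rewrite lee_fin.
exists [set t0]; split => //; first exact: lebesgue_measure_set1.
move=> x /= Hx; apply: contrapT => xt; apply: Hx => _.
by rewrite /h' /= mindicE mem_set ?mulr1.
Qed.

Lemma int_eq_off (t0 : R) (f1 f2 : R -> \bar R) :
  (forall t, (0 <= f1 t)%E) -> (forall t, (0 <= f2 t)%E) ->
  (forall t, t <> t0 -> f1 t = f2 t) ->
  (\int[leb]_t f1 t = \int[leb]_t f2 t)%E.
Proof.
move=> h1 h2 h12; apply/le_anti/andP; split; apply: (@int_le_off t0) => // t /h12 ->//.
Qed.

Lemma iint_eq n (f1 f2 : (nat -> R) -> \bar R) :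
  (forall g, f1 g = f2 g) -> iint n f1 = iint n f2.
Proof. by move=> h; congr iint; apply: funext. Qed.

Lemma iint0 n (f : (nat -> R) -> \bar R) : (forall g, f g = 0%E) -> iint n f = 0%E.
Proof.
elim: n f => [|n IH] f f0 /=; first exact: f0.
rewrite (_ : (fun t => _) = cst 0%E) ?integral0//.
by apply: funext => t; apply: IH.
Qed.

Lemma iint_ge0 n (f : (nat -> R) -> \bar R) : (forall g, (0 <= f g)%E) -> (0 <= iint n f)%E.
Proof.
elim: n f => [|n IH] f f0 /=; first exact: f0.
by apply: integral_ge0 => t _; apply: IH.
Qed.

Lemma iint_le n (f1 f2 : (nat -> R) -> \bar R) : (forall g, (0 <= f1 g)%E) ->
  (forall g, (f1 g <= f2 g)%E) -> (iint n f1 <= iint n f2)%E.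
Proof.
elim: n f1 f2 => [|n IH] f1 f2 f0 f12 /=; first exact: f12.
apply: (@int_le_off 0) => [t|t|t _]; first by apply: iint_ge0.
  by apply: iint_ge0 => g; apply: le_trans (f0 _) (f12 _).
by apply: IH.
Qed.

Lemma iint_hyp n (v : nat -> R) (c : R) (f1 f2 : (nat -> R) -> \bar R) :
  (exists2 i, (i < n)%N & v i != 0) ->
  (forall g, (0 <= f1 g)%E) -> (forall g, (0 <= f2 g)%E) ->
  (forall g : nat -> R, \sum_(i < n) v i * g i != c -> f1 g = f2 g) ->
  iint n f1 = iint n f2.
Proof.
elim: n v c f1 f2 => [|n IH] v c f1 f2 [i ilt vi] f10 f20 f12 /=; first by [].
have sumE (g : nat -> R) (t : R) : \sum_(i < n.+1) v i * (fun i => if i == n then t else g i) i =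
    \sum_(i < n) v i * g i + v n * t.
  rewrite big_ord_recr /= eqxx; congr (_ + _); apply: eq_bigr => j _.
  by rewrite (ltn_eqF (ltn_ord j)).
have [[j jlt vj]|allz] := pselect (exists2 j, (j < n)%N & v j != 0).
  congr integral; apply: funext => t.
  apply: (IH v (c - v n * t)) => //; first by exists j.
  move=> g hg; apply: f12; rewrite sumE.
  by apply: contra hg => /eqP <-; rewrite addrK.
have vjz j : (j < n)%N -> v j = 0.
  move=> jn; apply/eqP; apply: contrapT => hj; apply: allz; exists j => //; exact/negP.
have vn : v n != 0.
  move: ilt vi; rewrite ltnS leq_eqVlt => /orP[/eqP -> //|/vjz -> ]; by rewrite eqxx.
apply: (@int_eq_off (c / v n)) => [t|t|t tne]; try by apply: iint_ge0.
apply: iint_eq => g; apply: f12; rewrite sumE big1 ?add0r; last by move=> k _; rewrite vjz ?mul0r.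
apply: contra_notN tne => /eqP <-; by rewrite mulrAC mulfV // mul1r.
Qed.

Definition cubef n (a : nat -> R) (e : R) (g : nat -> R) : R :=
  \prod_(i < n) \1_(`[a i, a i + e]) (g i).

Lemma cubef01 n a e g : cubef n a e g = 0 \/ cubef n a e g = 1.
Proof.
rewrite /cubef; elim/big_ind: _ => [|x y [->|->] [->|->]|i _]; rewrite ?mulr0 ?mul0r ?mulr1; auto.
by rewrite indicE; case: (_ \in _); auto.
Qed.

Lemma iint_cube n (a : nat -> R) (e : R) : 0 <= e ->
  iint n (fun g => (cubef n a e g)%:E) = (e ^+ n)%:E.
Proof.
move=> e0; elim: n => [|n IH] /=; first by rewrite /cubef big_ord0.
have inner t : iint n (fun g => (cubef n.+1 a e (fun i => if i == n then t else g i))%:E)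
   = ((e ^+ n) * \1_(`[a n, a n + e]) t)%:E.
  have ce g : cubef n.+1 a e (fun i => if i == n then t else g i) =
      cubef n a e g * \1_(`[a n, a n + e]) t.
    rewrite /cubef big_ord_recr /= eqxx; congr (_ * _); apply: eq_bigr => j _.
    by rewrite (ltn_eqF (ltn_ord j)).
  rewrite indicE; case tI : (t \in _).
    by rewrite mulr1 -IH; apply: iint_eq => g; rewrite ce indicE tI mulr1.
  by rewrite mulr0 iint0// => g; rewrite ce indicE tI mulr0.
rewrite (_ : (fun t => _) = (fun t => (e ^+ n)%:E * (\1_(`[a n, a n + e]) t)%:E)%E); last first.
  by apply: funext => t; rewrite inner EFinM.
rewrite ge0_integralZl_EFin //.
rewrite integral_indic// setIT [X in (_ * X)%E]lebesgue_measure_itv /= lte_fin.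
case: ifPn => [_|].
  by rewrite -EFinD -EFinM addrC addKr exprSr.
  rewrite -subr_gt0 addrC addKr -leNgt => e0'.
  have -> : e = 0 by apply/le_anti/andP.
  by rewrite mule0 expr0n.
- by apply/measurable_EFinP; apply: measurable_indic.
- by apply: exprn_ge0.
Qed.
End P1.

Local Close Scope classical_set_scope.
Section P2.
Variable R : realType.
Variable d : nat.
Implicit Types x y z u v : 'rV[R]_d.

Lemma dotpE x y : dotp x y = \sum_(j < d) x 0 j * y 0 j.
Proof. by rewrite /dotp !mxE; apply: eq_bigr => j _; rewrite mxE. Qed.

Lemma dotpC x y : dotp x y = dotp y x.
Proof. by rewrite !dotpE; apply: eq_bigr => j _; rewrite mulrC. Qed.

Lemma dotpDl x y z : dotp (x + y) z = dotp x z + dotp y z.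
Proof. by rewrite !dotpE -big_split; apply: eq_bigr => j _; rewrite mxE mulrDl. Qed.

Lemma dotpNl x z : dotp (- x) z = - dotp x z.
Proof. by rewrite !dotpE -sumrN; apply: eq_bigr => j _; rewrite mxE mulNr. Qed.

Lemma dotpBl x y z : dotp (x - y) z = dotp x z - dotp y z.
Proof. by rewrite dotpDl dotpNl. Qed.

Lemma dotpZl a x z : dotp (a *: x) z = a * dotp x z.
Proof. by rewrite !dotpE mulr_sumr; apply: eq_bigr => j _; rewrite mxE mulrA. Qed.

Lemma dotpDr x y z : dotp z (x + y) = dotp z x + dotp z y.
Proof. by rewrite dotpC dotpDl !(dotpC z). Qed.
Lemma dotpBr x y z : dotp z (x - y) = dotp z x - dotp z y.
Proof. by rewrite dotpC dotpBl !(dotpC z). Qed.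
Lemma dotpZr a x z : dotp z (a *: x) = a * dotp z x.
Proof. by rewrite dotpC dotpZl dotpC. Qed.
Lemma dotp0l z : dotp 0 z = 0.
Proof. by rewrite -(scale0r 0) dotpZl mul0r. Qed.

Lemma dotp_suml I (r : seq I) (P : pred I) (F : I -> 'rV[R]_d) z :
  dotp (\sum_(i <- r | P i) F i) z = \sum_(i <- r | P i) dotp (F i) z.
Proof.
elim/big_rec2: _ => [|i a b _ <-]; first by rewrite dotp0l.
by rewrite dotpDl.
Qed.

Lemma dotp_ge0 x : 0 <= dotp x x.
Proof. by rewrite dotpE; apply: sumr_ge0 => j _; rewrite -expr2 sqr_ge0. Qed.

Lemma dotp_eq0 x : dotp x x = 0 -> x = 0.
Proof.
rewrite dotpE => /eqP; rewrite psumr_eq0 => [/allP H|j _]; last by rewrite -expr2 sqr_ge0.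
apply/rowP => j; rewrite mxE; have := H j (mem_index_enum _).
by rewrite implyTb mulf_eq0 orbb => /eqP.
Qed.

Lemma coord_le1 x j : dotp x x <= 1 -> `|x 0 j| <= 1.
Proof.
move=> h; rewrite -(ler_pXn2r (n := 2)) ?nnegrE// ?expr1n ?real_normK ?num_real//.
apply: le_trans h; rewrite dotpE (bigD1 j)//= -expr2 lerDl.
by apply: sumr_ge0 => k _; rewrite -expr2 sqr_ge0.
Qed.

Lemma enorm_sqr x : enorm x ^+ 2 = dotp x x.
Proof. by rewrite /enorm sqr_sqrtr// dotp_ge0. Qed.

Lemma sqrt2_cond x y : dotp x x = 1 -> dotp y y = 1 ->
  (Num.sqrt 2 <= enorm (y - x)) = (dotp y x <= 0).
Proof.
move=> hx hy.
have E : dotp (y - x) (y - x) = 2 - 2 * dotp y x.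
  rewrite dotpBl !dotpBr hx hy (dotpC x y); lra.
rewrite /enorm E.
have [h|h] := leP 0 (2 - 2 * dotp y x).
  rewrite ler_sqrt//; apply/idP/idP => H; lra.
rewrite (ltr0_sqrtr h); apply/idP/idP => H.
  by move: H; rewrite leNgt sqrtr_gt0 ltr0n.
lra.
Qed.


Lemma ker_nz {m n} (A : 'M[R]_(m, n)) : (n < m)%N ->
  exists c : 'rV[R]_m, c != 0 /\ c *m A = 0.
Proof.
move=> nm.
have rk : (0 < \rank (kermx A))%N.
  by rewrite mxrank_ker subn_gt0 (leq_ltn_trans (rank_leq_col A)).
have [i ri] : exists i, row i (kermx A) != 0.
  apply: contrapT => H; move: rk.
  suff -> : kermx A = 0 by rewrite mxrank0.
  apply/row_matrixP => i; rewrite row0; apply/eqP; apply: contrapT => hi.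
  by apply: H; exists i; apply/negP.
by exists (row i (kermx A)); split=> //; rewrite -row_mul mulmx_ker row0.
Qed.

Lemma perp_exists (s : seq 'rV[R]_d) : (size s < d)%N ->
  exists v, v != 0 /\ forall x, x \in s -> dotp v x = 0.
Proof.
move=> sd.
pose A : 'M[R]_(d, size s) := \matrix_(j < d, i < size s) (nth 0 s i) 0 j.
have [c [c0 cA]] := ker_nz A sd.
exists c; split=> // x xs.
have ix : (index x s < size s)%N by rewrite index_mem.
have := congr1 (fun M : 'M[R]_(1, size s) => M 0 (Ordinal ix)) cA; rewrite !mxE => <-.
rewrite dotpE; apply: eq_bigr => j _; rewrite mxE /= nth_index//.
Qed.

Lemma last_null (X : 'I_d.+1 -> 'rV[R]_d) :
  (forall i j, i != j -> dotp (X i) (X j) <= 0) ->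
  exists i, forall y, (forall j, dotp y (X j) <= 0) -> dotp y (X i) = 0.
Proof.
move=> hX.
pose M : 'M[R]_(d.+1, d) := \matrix_(i, j) X i 0 j.
have rowM i : row i M = X i by apply/rowP => j; rewrite !mxE.
have [c0 [c00 cM]] := ker_nz M (ltnSn d).
have [c [i0 ci0 cX]] : exists c : 'I_d.+1 -> R, exists2 i0, 0 < c i0 & \sum_i c i *: X i = 0.
  have [j cj] : exists j, c0 0 j != 0.
    apply: contrapT => H; move/eqP: c00; apply; apply/rowP => j; rewrite mxE.
    by apply/eqP; apply: contrapT => hj; apply: H; exists j; apply/negP.
  have sE : \sum_i c0 0 i *: X i = 0.
    by rewrite -[RHS]cM mulmx_sum_row; apply: eq_bigr => i _; rewrite rowM.
  have [cpos|cneg] := ltP 0 (c0 0 j).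
    by exists (fun i => c0 0 i); exists j.
  exists (fun i => - c0 0 i); exists j.
    by rewrite oppr_gt0 lt_neqAle cj cneg.
  by rewrite (eq_bigr (fun i => - (c0 0 i *: X i))) ?sumrN ?sE ?oppr0// => i _; rewrite scaleNr.
pose p i := if 0 < c i then c i else 0.
pose q i := p i - c i.
have p0 i : 0 <= p i by rewrite /p; case: ifPn => // /ltW.
have q0 i : 0 <= q i.
  rewrite /q /p; case: ifPn => [_|]; first by rewrite subrr.
  rewrite -leNgt => h; rewrite sub0r oppr_ge0 //.
have pq i : p i * q i = 0.
  by rewrite /q /p; case: ifPn => _; [rewrite subrr mulr0|rewrite mul0r].
set u := \sum_i p i *: X i.
have uq : u = \sum_i q i *: X i.
  apply/eqP; rewrite -subr_eq0 -sumrB; apply/eqP; rewrite -[RHS]cX; apply: eq_bigr => i _.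
  by rewrite -scalerBl /q opprB addrC subrK.
have uu : dotp u u <= 0.
  rewrite {2}uq /u dotp_suml; apply: sumr_le0 => i _.
  rewrite dotpZl dotpC dotp_suml mulr_sumr; apply: sumr_le0 => j _.
  rewrite dotpZl dotpC.
  have [->|ij] := eqVneq i j; first by rewrite mulrA pq mul0r.
  rewrite mulrA; apply: mulr_ge0_le0; [exact: mulr_ge0|exact: hX].
have u0 : u = 0 by apply: dotp_eq0; apply/le_anti/andP; split=> //; apply: dotp_ge0.
exists i0 => y hy.
have : dotp u y = 0 by rewrite u0 dotp0l.
rewrite /u dotp_suml => /eqP; rewrite -oppr_eq0 -sumrN psumr_eq0 => [/allP H|i _]; last first.
  by rewrite dotpZl oppr_ge0 dotpC; apply: mulr_ge0_le0.
have := H i0 (mem_index_enum _); rewrite implyTb dotpZl oppr_eq0 mulf_eq0 dotpC.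
by rewrite /p ci0 (gt_eqF ci0) => /eqP.
Qed.

End P2.

Section P3.
Variable R : realType.
Variable d : nat.
Implicit Types x y z u v : 'rV[R]_d.

Definition cone (f : 'rV[R]_d -> \bar R) x : \bar R :=
  if (0 < dotp x x) && (dotp x x <= 1) then f ((enorm x)^-1 *: x) else 0%E.

Lemma sph_intE f : sph_int f = iint d (fun g => cone f (\row_(i < d) g i)).
Proof. by []. Qed.

Definition ext v (i : nat) : R := oapp (fun j : 'I_d => v 0 j) 0 (insub i).
Lemma extE v (j : 'I_d) : ext v j = v 0 j.
Proof. by rewrite /ext valK. Qed.

Lemma dotp_row v (g : nat -> R) : dotp v (\row_(i < d) g i) = \sum_(i < d) ext v i * g i.
Proof. by rewrite dotpE; apply: eq_bigr => j _; rewrite mxE extE. Qed.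

Lemma enorm_gt0 x : 0 < dotp x x -> 0 < enorm x.
Proof. by move=> h; rewrite /enorm sqrtr_gt0. Qed.

Lemma normalize_unit x : 0 < dotp x x -> dotp ((enorm x)^-1 *: x) ((enorm x)^-1 *: x) = 1.
Proof.
move=> h; rewrite dotpZl dotpZr mulrA -expr2 exprVn enorm_sqr mulVf//.
by rewrite gt_eqF.
Qed.

Lemma cone_ge0 f x : (forall y, (0 <= f y)%E) -> (0 <= cone f x)%E.
Proof. by move=> f0; rewrite /cone; case: ifP. Qed.

Lemma nz_coord {v} : v != 0 -> exists j, v 0 j != 0.
Proof.
move=> v0; apply: contrapT => H; move/eqP: v0; apply; apply/rowP => j; rewrite mxE.
by apply/eqP; apply: contrapT => hj; apply: H; exists j; apply/negP.
Qed.

Lemma sph_int_hyp v (f1 f2 : 'rV[R]_d -> \bar R) : v != 0 ->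
  (forall y, (0 <= f1 y)%E) -> (forall y, (0 <= f2 y)%E) ->
  (forall y, dotp y y = 1 -> dotp v y != 0 -> f1 y = f2 y) ->
  sph_int f1 = sph_int f2.
Proof.
move=> v0 f10 f20 f12; rewrite !sph_intE.
apply: (@iint_hyp _ d (ext v) 0).
- by have [j vj] := nz_coord v0; exists j => //; rewrite extE.
- by move=> g; apply: cone_ge0.
- by move=> g; apply: cone_ge0.
move=> g; rewrite -dotp_row /cone => hv; case: ifP => // /andP[h _].
apply: f12; first exact: normalize_unit.
rewrite dotpZr mulf_neq0 // invr_eq0 gt_eqF// enorm_gt0//.
Qed.

Lemma sph_int_ge0 f : (forall y, (0 <= f y)%E) -> (0 <= sph_int f)%E.
Proof. by move=> f0; rewrite sph_intE; apply: iint_ge0 => g; apply: cone_ge0. Qed.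

Lemma sph_int0 f : (forall y, f y = 0%E) -> sph_int f = 0%E.
Proof. by move=> f0; rewrite sph_intE; apply: iint0 => g; rewrite /cone f0; case: ifP. Qed.

Lemma sph_meas_ge0 (A : set 'rV[R]_d) : (0 <= sph_meas A)%E.
Proof. by apply: sph_int_ge0 => y; rewrite lee_fin. Qed.

Lemma sph_meas_le (A : set 'rV[R]_d) : (sph_meas A <= (2 ^+ d)%:E)%E.
Proof.
rewrite /sph_meas sph_intE -(@iint_cube _ d (fun=> -1) 2)//.
apply: iint_le => g; first by apply: cone_ge0 => y; rewrite lee_fin.
rewrite /cone; case: ifP => [/andP[_ h]|_]; last by rewrite lee_fin; case: (cubef01 d (fun=> -1) 2 g) => ->.
have -> : cubef d (fun=> -1) 2 g = 1.
  rewrite /cubef big1 // => j _; rewrite indicE mem_set//=.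
  have := coord_le1 j h; rewrite mxE in_itv /= => /ler_normlP [h1 h2].
  by apply/andP; split; lra.
by rewrite lee_fin indicE; case: (_ \in _).
Qed.

Lemma sph_meas_fin (A : set 'rV[R]_d) : sph_meas A \is a fin_num.
Proof.
by rewrite ge0_fin_numE ?sph_meas_ge0// (le_lt_trans (sph_meas_le A)) ?ltry.
Qed.

End P3.

Section P4.
Variable R : realType.
Variable d : nat.
Implicit Types x y z u v w : 'rV[R]_d.

Lemma fin_min (T : eqType) (s : seq T) (f : T -> R) :
  (forall t, t \in s -> 0 < f t) -> exists2 e, 0 < e & forall t, t \in s -> e <= f t.
Proof.
elim: s => [|a s IH] H; first by exists 1.
have [e e0 He] := IH (fun t ts => H t (mem_behead (s := a :: s) ts)).
have fa : 0 < f a by apply: H; rewrite mem_head.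
exists (Num.min (f a) e); first by rewrite lt_min fa e0.
move=> t; rewrite in_cons => /orP[/eqP ->|xs]; first by rewrite ge_min lexx.
by rewrite ge_min He ?orbT.
Qed.

Lemma dotp_abs_le u x e : (forall j, `|u 0 j| <= e) -> dotp x x = 1 ->
  `|dotp u x| <= d%:R * e.
Proof.
move=> hu hx; rewrite dotpE; apply: le_trans (ler_norm_sum _ _ _) _.
have -> : d%:R * e = \sum_(j < d) e by rewrite sumr_const card_ord mulr_natl.
apply: ler_sum => j _; rewrite normrM -[e]mulr1; apply: ler_pM => //.
by apply: coord_le1; rewrite hx.
Qed.

Lemma dotp_sq_le w b : (forall j, `|w 0 j| <= b) -> dotp w w <= d%:R * b ^+ 2.
Proof.
move=> hw; rewrite dotpE.
have -> : d%:R * b ^+ 2 = \sum_(j < d) b ^+ 2 by rewrite sumr_const card_ord mulr_natl.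
apply: ler_sum => j _; rewrite -expr2 -real_normK ?num_real//.
have b0 : 0 <= b by apply: le_trans (hw j).
have := hw j; have := normr_ge0 (w 0 j); move: (`|w 0 j|) => a a0 ab; nra.
Qed.

Lemma coord_le_dot w j : w 0 j ^+ 2 <= dotp w w.
Proof.
rewrite dotpE (bigD1 j)//= -expr2 lerDl.
by apply: sumr_ge0 => k _; rewrite -expr2 sqr_ge0.
Qed.


Lemma sph_meas_pos (s : seq 'rV[R]_d) z : z != 0 ->
  (forall x, x \in s -> dotp x x = 1) -> (forall x, x \in s -> dotp z x < 0) ->
  (0 < sph_meas (avail (Num.sqrt 2) s))%E.
Proof.
move=> z0 hs hz.
have [j0 zj0] := nz_coord z0.
have d0 : (0 < d)%N by case: j0 {zj0} => j /= /(leq_ltn_trans (leq0n j)).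
have dpos : 0 < d%:R :> R by rewrite ltr0n.
pose K := \sum_(j < d) `|z 0 j|.
have zK j : `|z 0 j| <= K by rewrite /K (bigD1 j)//= lerDl sumr_ge0.
have K0 : 0 < K by apply: lt_le_trans (zK j0); rewrite normr_gt0.
pose D := d%:R^-1 : R.
have D0 : 0 < D by rewrite invr_gt0.
have D1 : D <= 1 by rewrite invf_le1// ler1n.
pose k := (2 * d%:R * K)^-1.
have k0 : 0 < k by rewrite invr_gt0 !mulr_gt0.
pose z' := k *: z.
have hz'j j : `|z' 0 j| <= D / 2.
  have kE : k = (D / 2) * K^-1 by rewrite /k /D !invfM; ring.
  rewrite mxE normrM gtr0_norm//.
  have -> : k * `|z 0 j| = (D/2) * (`|z 0 j| / K) by rewrite kE; ring.
  rewrite -[X in _ <= X]mulr1.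
  apply: ler_pM => //; first by rewrite ltW// divr_gt0.
    by rewrite mulr_ge0// invr_ge0 ltW.
  by rewrite ler_pdivrMr// mul1r.
pose c := `|z' 0 j0|.
have c0 : 0 < c by rewrite normr_gt0 mxE mulf_neq0// gt_eqF.
have hz' x : x \in s -> dotp z' x < 0 by move=> xs; rewrite dotpZl pmulr_rlt0// hz.
have := @fin_min _ s (fun x => - dotp z' x); case => [x xs|δ δ0 hδ]; first by rewrite oppr_gt0 hz'.
pose e := Num.min D (Num.min c (δ * D)).
have e0 : 0 < e by rewrite !lt_min D0 c0 mulr_gt0.
have e1 : e <= D by rewrite ge_min lexx.
have e2 : e <= c by rewrite /e !ge_min lexx !orbT.
have e3 : e <= δ * D by rewrite /e !ge_min lexx !orbT.
have e3' : e * d%:R <= δ.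
  by rewrite -ler_pdivlMr// ; apply: le_trans e3 _; rewrite /D.
pose a i := ext z' i - e / 2.
apply: (@lt_le_trans _ _ (e ^+ d)%:E); first by rewrite lte_fin exprn_gt0.
rewrite -(iint_cube d a (ltW e0)) /sph_meas sph_intE.
apply: iint_le => g; first by rewrite lee_fin; case: (cubef01 d a e g) => ->.
case: (cubef01 d a e g) => Hc; rewrite Hc; first by apply: cone_ge0 => y; rewrite lee_fin.
pose w := \row_(i < d) g i.
have hg j : `|w 0 j - z' 0 j| <= e / 2.
  have : \1_(`[a j, a j + e]%classic) (g j) = 1 :> R.
    move: Hc; rewrite /cubef (bigD1 j) //= indicE.
    by case: (_ \in _) => //; rewrite mul0r => /eqP; rewrite eq_sym oner_eq0.
  rewrite indicE; case: (_ \in _) / boolP => [|_ /eqP]; last by rewrite eq_sym oner_eq0.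
  rewrite inE /= in_itv /= /a extE mxE => /andP[h1 h2] _.
  by rewrite ler_distl /w !mxE; apply/andP; split; lra.
have hw j : `|w 0 j| <= D.
  have h1 := hz'j j; have h2 := hg j.
  have : `|w 0 j| <= `|z' 0 j| + `|w 0 j - z' 0 j|.
    by rewrite -[X in `|X|](subrK (z' 0 j)) addrC; apply: ler_normD.
  lra.
have dww1 : dotp w w <= 1.
  apply: le_trans (dotp_sq_le hw) _.
  by rewrite /D expr2 mulrA mulfV ?gt_eqF// mul1r.
have dww0 : 0 < dotp w w.
  apply: lt_le_trans (coord_le_dot w j0).
  have h1 := hg j0.
  have : `|z' 0 j0| <= `|w 0 j0| + `|z' 0 j0 - w 0 j0|.
    by rewrite -[X in `|X| <= _](subrK (w 0 j0)) addrC; apply: ler_normD.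
  rewrite distrC -/c => h2.
  have : 0 < `|w 0 j0| by lra.
  by rewrite normr_gt0 => /(expf_neq0 2); rewrite lt_def sqr_ge0 andbT.
have dwx x : x \in s -> dotp w x < 0.
  move=> xs; rewrite -(subrK z' w) dotpDl.
  have h1 := hδ x xs.
  have : `|dotp (w - z') x| <= d%:R * (e / 2).
    by apply: dotp_abs_le; [move=> j; have := hg j; rewrite !mxE; exact|exact: hs].
  move/ler_normlP => [_ h2]; lra.
rewrite /cone dww0 dww1 /= lee_fin indicE mem_set//; split.
  by rewrite /sphere /=; apply: normalize_unit.
move=> x xs; rewrite sqrt2_cond ?(hs x xs) ?normalize_unit//.
by rewrite dotpZl pmulr_rle0 ?invr_gt0 ?enorm_gt0// ltW// dwx.

Qed.
End P4.

Section P5.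
Variable R : realType.
Variable d : nat.
Implicit Types x y z u v w : 'rV[R]_d.
Implicit Types s : seq 'rV[R]_d.

Definition unitl s := forall x, x \in s -> dotp x x = 1.
Definition pw s := forall i j, (i < size s)%N -> (j < size s)%N -> i != j ->
  dotp (nth 0 s i) (nth 0 s j) <= 0.
Definition good s := exists2 z, z != 0 & forall x, x \in s -> dotp z x < 0.

Lemma availP s y : unitl s ->
  avail (Num.sqrt 2) s y <-> dotp y y = 1 /\ forall x, x \in s -> dotp y x <= 0.
Proof.
move=> us; split => [[hy hx]|[hy hx]]; split => // x xs.
  by rewrite -(sqrt2_cond (us x xs) hy); apply: hx.
by rewrite (sqrt2_cond (us x xs) hy) hx.
Qed.

Lemma unit_nz x : dotp x x = 1 -> x != 0.
Proof. by move=> h; apply/eqP => x0; move: h; rewrite x0 dotp0l => /eqP; rewrite eq_sym oner_eq0. Qed.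

Lemma null_last s : size s = d.+1 -> unitl s -> pw s ->
  sph_meas (avail (Num.sqrt 2) s) = 0%E.
Proof.
move=> ss us ps.
pose X (i : 'I_d.+1) := nth 0 s i.
have [i0 Hi0] : exists i, forall y, (forall j, dotp y (X j) <= 0) -> dotp y (X i) = 0.
  apply: last_null => i j ij; apply: ps; rewrite ?ss ?ltn_ord//.
have Xs i : X i \in s by apply: mem_nth; rewrite ss ltn_ord.
rewrite /sph_meas (@sph_int_hyp _ _ (X i0) _ (fun=> 0%E)).
- by apply: sph_int0.
- by apply: unit_nz; apply: us.
- by move=> y; rewrite lee_fin.
- by [].
move=> y hy hv; rewrite indicE; case: (boolP (y \in _)) => // /set_mem /(availP _ us) [_ H].
exfalso; move/eqP: hv; apply; rewrite dotpC; apply: Hi0 => j; exact: H.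
Qed.

Lemma rsa_ge0 k s : (0 <= rsa_stop_prob (Num.sqrt 2) k s)%E.
Proof.
elim: k s => [|k IH] s /=; first by case: ifP.
case: ifP => // _; apply: mule_ge0; first by rewrite lee_fin invr_ge0 fine_ge0// sph_meas_ge0.
by apply: sph_int_ge0 => y; apply: mule_ge0 => //; rewrite lee_fin.
Qed.


Lemma pw_cons s y : pw s -> (forall x, x \in s -> dotp y x <= 0) -> pw (y :: s).
Proof.
move=> ps hy [|i] [|j] //= hi hj ij.
- by apply: hy; apply: mem_nth.
- by rewrite dotpC; apply: hy; apply: mem_nth.
- by apply: ps.
Qed.

Lemma good_cons s y v : good s -> (forall x, x \in s -> dotp v x = 0) ->
  dotp v y != 0 -> good (y :: s).
Proof.
move=> [z z0 hz] hv vy.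
pose l := - (`|dotp z y| + 1) / dotp v y.
pose z' := z + l *: v.
have hy : dotp z' y < 0.
  rewrite /z' dotpDl dotpZl /l divfK //.
  have := ler_norm (dotp z y); lra.
exists z'.
  by apply/eqP => e; move: hy; rewrite e dotp0l ltxx.
move=> x; rewrite in_cons => /orP[/eqP ->//|xs].
by rewrite /z' dotpDl dotpZl hv// mulr0 addr0 hz.
Qed.

Lemma main k : forall s, (size s + k = d.+1)%N -> unitl s -> pw s -> good s ->
  rsa_stop_prob (Num.sqrt 2) k s = 1%E.
Proof.
elim: k => [|k IH] s sk us ps gs /=.
  by rewrite addn0 in sk; rewrite null_last// ltxx.
have [z z0 hz] := gs.
have mpos := sph_meas_pos z0 us hz.
rewrite mpos.
set m := sph_meas _ in mpos *.
suff -> : sph_int (fun y => ((\1_(avail (Num.sqrt 2) s) y)%:E *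
      rsa_stop_prob (Num.sqrt 2) k (y :: s))%E) = m.
  have mf : m \is a fin_num by apply: sph_meas_fin.
  rewrite -[in X in (_ * X)%E](fineK mf) -EFinM mulVf//.
  by rewrite gt_eqF// -lte_fin fineK.
have step y : avail (Num.sqrt 2) s y -> unitl (y :: s) /\ pw (y :: s).
  move=> /(availP _ us) [uy hy]; split.
    by move=> x; rewrite in_cons => /orP[/eqP ->//|/us].
  exact: pw_cons.
case: k IH sk => [|k] IH sk.
  rewrite /m /sph_meas; congr sph_int; apply: funext => y.
  rewrite indicE; case: (boolP (y \in _)) => [/set_mem ay|_]; last by rewrite mul0e.
  have [uy py] := step y ay.
  have sz : size (y :: s) = d.+1 by rewrite /= -(addn1 (size s)); exact: sk.
  by rewrite /= (null_last sz uy py) ltxx mule1.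
have sd : (size s < d)%N by rewrite -ltnS -sk !addnS !ltnS leq_addr.
have [v [v0 hv]] := perp_exists sd.
apply: (sph_int_hyp v0).
- by move=> y; apply: mule_ge0; [rewrite lee_fin|apply: rsa_ge0].
- by move=> y; rewrite lee_fin.
move=> y uy vy; rewrite indicE; case: (boolP (y \in _)) => [/set_mem ay|_]; last by rewrite mul0e.
have [uy' py] := step y ay.
rewrite IH ?mule1//; first by rewrite /= addSnnS.
exact: good_cons gs hv vy.
Qed.

Lemma main_thm : (0 < d)%N -> rsa_stop_prob (Num.sqrt 2) d.+1 (nil : seq 'rV[R]_d) = 1%E.
Proof.
move=> d0; apply: main => //.
pose j0 : 'I_d := Ordinal d0.
exists (\row_(i < d) (i == j0)%:R).
  by apply/eqP => /rowP /(_ j0); rewrite !mxE eqxx => /eqP; rewrite oner_eq0.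
by [].
Qed.

End P5.


Theorem theorem1 (R : realType) (d : nat) (hd : (2 <= d)%N) :
  rsa_stop_prob (R := R) (d := d) (Num.sqrt 2) d.+1 [::] = 1%E.
Proof. exact: main_thm (ltnW hd). Qed.
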